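(* For $\mathbf{x}=(x_0,x_1,x_2),\ \mathbf{y}=(y_0,y_1,y_2)\in\mathbb{R}^3$ let $\langle\mathbf{x},\mathbf{y}\rangle:=x_0y_0-x_1y_1-x_2y_2$. For parameters $\alpha,\beta$ set $q=\alpha-\beta$ and define $$\hat k(\mathbf{x},\mathbf{y},q)=\frac{\langle\mathbf{x},\mathbf{x}\rangle-\langle\mathbf{y},\mathbf{y}\rangle+q^2}{\langle\mathbf{x}+\mathbf{y},\mathbf{x}+\mathbf{y}\rangle+q^2},\qquad \hat{\mathbf{r}}(\mathbf{x},\mathbf{y},q)=\frac{(x_1y_2-x_2y_1,\ x_0y_2-x_2y_0,\ x_1y_0-x_0y_1)}{\langle\mathbf{x}+\mathbf{y},\mathbf{x}+\mathbf{y}\rangle+q^2}.$$ Define $\hat{\mathbf{R}}_{\alpha,\beta}:(\mathbf{x},\mathbf{y})\mapsto(\mathbf{u},\mathbf{v})$ by $$\mathbf{u}=\hat k(\mathbf{x},\mathbf{y},q)\,\mathbf{x}+\big(1-\hat k(\mathbf{y},\mathbf{x},q)\big)\mathbf{y}+2q\,\hat{\mathbf{r}}(\mathbf{x},\mathbf{y},q),$$ $$\mathbf{v}=\big(1-\hat k(\mathbf{x},\mathbf{y},q)\big)\mathbf{x}+\hat k(\mathbf{y},\mathbf{x},q)\,\mathbf{y}-2q\,\hat{\mathbf{r}}(\mathbf{x},\mathbf{y},q).$$ Then $\hat{\mathbf{R}}_{\alpha,\beta}$ is a parametric quadrirational Yang--Baxter map which satisfies the invariant conditions $$\mathbf{u}+\mathbf{v}=\mathbf{x}+\mathbf{y},\quad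 \langle\mathbf{u},\mathbf{u}\rangle=\langle\mathbf{x},\mathbf{x}\rangle,\quad \langle\mathbf{v},\mathbf{v}\rangle=\langle\mathbf{y},\mathbf{y}\rangle,$$ and admits a Lax representation $\mathbf{L}(\mathbf{u},\alpha,\zeta)\mathbf{L}(\mathbf{v},\beta,\zeta)=\mathbf{L}(\mathbf{y},\beta,\zeta)\mathbf{L}(\mathbf{x},\alpha,\zeta)$ with Lax matrix $$\mathbf{L}(\mathbf{x},\alpha,\zeta)=\begin{pmatrix}\zeta+i(x_2-\alpha) & x_0+x_1\\ x_0-x_1 & \zeta-i(x_2+\alpha)\end{pmatrix}.$$
   Context: A parametric Yang--Baxter map is a family of maps $R_{\alpha,\beta}:\mathcal{X}\times\mathcal{X}\to\mathcal{X}\times\mathcal{X}$, $R_{\alpha,\beta}(x,y)=(u(x,\alpha,y,\beta),v(x,\alpha,y,\beta))$, such that the map $((x,\alpha),(y,\beta))\mapsto((u,\alpha),(v,\beta))$ on $(\mathcal{X}\times\mathcal{I})^2$ satisfies the set-theoretical Yang--Baxter equation $R_{23}\circ R_{13}\circ R_{12}=R_{12}\circ R_{13}\circ R_{23}$, where $R_{ij}$ denotes the action of the map on the $i$-th and $j$-th factors of a triple product (e.g. $R_{13}(x,y,z)=(u(x,z),y,v(x,z))$). Equivalently, $R^{23}_{\beta,\gamma}\circ R^{13}_{\alpha,\gamma}\circ R^{12}_{\alpha,\beta}=R^{12}_{\alpha,\beta}\circ R^{13}_{\alpha,\gamma}\circ R^{23}_{\beta,\gamma}$. It is quadrirational if for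 fixed $y$ and fixed $x$ the maps $u(\cdot,y)$ and $v(x,\cdot)$ are birational isomorphisms of $\mathcal{X}$. Here $\mathcal{X}=\mathbb{R}^3$ and maps are understood generically, where defined; $i=\sqrt{-1}$ and $\zeta\in\mathbb{C}$ is a spectral parameter. *)

(* Defs.v *)
From HB Require Import structures.
From mathcomp Require Import all_boot all_order all_algebra.
From mathcomp Require Import complex.
From mathcomp Require Import mpoly.
Set Implicit Arguments. Unset Strict Implicit. Unset Printing Implicit Defensive.
Import Order.TTheory GRing.Theory Num.Theory.
Local Open Scope ring_scope.

Section Defs.
Variable R : rcfType.

Definition vec := 'rV[R]_3.
Definition co (x : vec) (i : 'I_3) : R := x ord0 i.
Definition mkvec (a b c : R) : vec :=
  \row_(i < 3) (if i == 0 :> nat then a else if i == 1 :> nat then b else c).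

Definition mink (x y : vec) : R :=
  co x 0 * co y 0 - co x 1 * co y 1 - co x 2 * co y 2.

Definition den (x y : vec) (q : R) : R := mink (x + y) (x + y) + q ^+ 2.

Definition khat (x y : vec) (q : R) : R :=
  (mink x x - mink y y + q ^+ 2) / den x y q.

Definition rhat (x y : vec) (q : R) : vec :=
  (den x y q)^-1 *: mkvec (co x 1 * co y 2 - co x 2 * co y 1)
                          (co x 0 * co y 2 - co x 2 * co y 0)
                          (co x 1 * co y 0 - co x 0 * co y 1).

Definition Ru (a b : R) (x y : vec) : vec :=
  let q := a - b in
  khat x y q *: x + (1 - khat y x q) *: y + (2 * q) *: rhat x y q.

Definition Rv (a b : R) (x y : vec) : vec :=
  let q := a - b in
  (1 - khat x y q) *: x + khat y x q *: y - (2 * q) *: rhat x y q.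

Definition Rhat (a b : R) (xy : vec * vec) : vec * vec :=
  (Ru a b xy.1 xy.2, Rv a b xy.1 xy.2).

Definition Rdef (a b : R) (xy : vec * vec) : Prop := den xy.1 xy.2 (a - b) != 0.

(* Yang--Baxter equation R23 o R13 o R12 = R12 o R13 o R23 (with parameters),
   understood where both sides are defined (every intermediate step defined). *)
Definition YB_where_defined : Prop :=
  forall (a b c : R) (x y z : vec),
    let (x1, y1) := Rhat a b (x, y) in
    let (x2, z1) := Rhat a c (x1, z) in
    let (y2, z2) := Rhat b c (y1, z1) in
    let (y1', z1') := Rhat b c (y, z) in
    let (x1', z2') := Rhat a c (x, z1') in
    let (x2', y2') := Rhat a b (x1', y1') in
    Rdef a b (x, y) -> Rdef a c (x1, z) -> Rdef b c (y1, z1) ->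
    Rdef b c (y, z) -> Rdef a c (x, z1') -> Rdef a b (x1', y1') ->
    (x2, y2, z2) = (x2', y2', z2').

Definition ptv (x : vec) : 'I_3 -> R := fun i => co x i.

Record ratmap := RatMap { rnum : 'I_3 -> {mpoly R[3]}; rden : 'I_3 -> {mpoly R[3]} }.

Definition ratdef (F : ratmap) (x : vec) : Prop :=
  forall i, (rden F i).@[ptv x] != 0.

Definition rateval (F : ratmap) (x : vec) : vec :=
  \row_(i < 3) ((rnum F i).@[ptv x] / (rden F i).@[ptv x]).

(* f : R^3 -> R^3 (a total function, meaningful where defined) is a
   birational isomorphism of R^3: it agrees on a nonempty Zariski open set
   with a rational map F having a rational inverse G, i.e. G o F = id and
   F o G = id on nonempty Zariski open sets (complements of hypersurfaces
   h = 0 with h a nonzero polynomial). *)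
Definition birational (f : vec -> vec) : Prop :=
  exists (F G : ratmap) (h1 h2 : {mpoly R[3]}),
    h1 != 0 /\ h2 != 0 /\
    (forall x, h1.@[ptv x] != 0 ->
       [/\ ratdef F x, rateval F x = f x, ratdef G (f x) & rateval G (f x) = x]) /\
    (forall w, h2.@[ptv w] != 0 ->
       [/\ ratdef G w, ratdef F (rateval G w) & rateval F (rateval G w) = w]).

Definition quadrirational : Prop :=
  forall a b : R,
    (forall y : vec, birational (fun x => Ru a b x y)) /\
    (forall x : vec, birational (fun y => Rv a b x y)).

Definition Lax (x : vec) (a : R) (zeta : R[i]) : 'M[R[i]]_2 :=
  \matrix_(i < 2, j < 2)
    (if i == 0 :> nat then
       (if j == 0 :> nat then zeta + (Complex 0 1) * ((co x 2 - a)%:C)%C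
        else ((co x 0 + co x 1)%:C)%C)
     else
       (if j == 0 :> nat then ((co x 0 - co x 1)%:C)%C
        else zeta - (Complex 0 1) * ((co x 2 + a)%:C)%C)).

End Defs.

(* Main.v *)
Require Import Defs.
From HB Require Import structures.
From mathcomp Require Import all_boot all_order all_algebra.
From mathcomp Require Import complex.
From mathcomp Require Import mpoly ring lra.
Set Implicit Arguments. Unset Strict Implicit. Unset Printing Implicit Defensive.
Import GRing.Theory Num.Theory.
Local Open Scope ring_scope.


Section Work.
Variable R : rcfType.
Local Notation C := (R[i]).
Implicit Types (x y z u v w : vec R).

Definition mx2 (a b c d : C) : 'M[C]_2 :=
  \matrix_(i < 2, j < 2)
    (if i == 0 :> nat then (if j == 0 :> nat then a else b)
     else (if j == 0 :> nat then c else d)).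

Lemma mx2E (M : 'M[C]_2) : M = mx2 (M 0 0) (M 0 1) (M 1 0) (M 1 1).
Proof.
apply/matrixP => i j; rewrite mxE.
case: i => [[|[|//]]] Hi; case: j => [[|[|//]]] Hj /=;
  congr (M _ _); exact: val_inj.
Qed.

Lemma mx2_mul a b c d e f g h :
  mx2 a b c d *m mx2 e f g h =
  mx2 (a * e + b * g) (a * f + b * h) (c * e + d * g) (c * f + d * h).
Proof.
apply/matrixP => i j; rewrite !mxE !big_ord_recl big_ord0 !mxE /= addr0.
by case: i => [[|[|//]]] Hi; case: j => [[|[|//]]] Hj.
Qed.

Lemma mx2_add a b c d e f g h :
  mx2 a b c d + mx2 e f g h = mx2 (a + e) (b + f) (c + g) (d + h).
Proof.
apply/matrixP => i j; rewrite !mxE.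
by case: i => [[|[|//]]] Hi; case: j => [[|[|//]]] Hj.
Qed.

Lemma mx2_opp a b c d : - mx2 a b c d = mx2 (- a) (- b) (- c) (- d).
Proof.
apply/matrixP => i j; rewrite !mxE.
by case: i => [[|[|//]]] Hi; case: j => [[|[|//]]] Hj.
Qed.

Lemma mx2_sub a b c d e f g h :
  mx2 a b c d - mx2 e f g h = mx2 (a - e) (b - f) (c - g) (d - h).
Proof. by rewrite mx2_opp mx2_add. Qed.

Lemma mx2_scale k a b c d : k *: mx2 a b c d = mx2 (k * a) (k * b) (k * c) (k * d).
Proof.
apply/matrixP => i j; rewrite !mxE.
by case: i => [[|[|//]]] Hi; case: j => [[|[|//]]] Hj.
Qed.

Lemma mx2_inj a b c d e f g h :
  mx2 a b c d = mx2 e f g h -> [/\ a = e, b = f, c = g & d = h].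
Proof.
move=> H.
have H00 := congr1 (fun M : 'M[C]_2 => M 0 0) H.
have H01 := congr1 (fun M : 'M[C]_2 => M 0 1) H.
have H10 := congr1 (fun M : 'M[C]_2 => M 1 0) H.
have H11 := congr1 (fun M : 'M[C]_2 => M 1 1) H.
by move: H00 H01 H10 H11; rewrite !mxE /=.
Qed.

Lemma mx2_eq a b c d e f g h :
  a = e -> b = f -> c = g -> d = h -> mx2 a b c d = mx2 e f g h.
Proof. by move=> -> -> -> ->. Qed.

Definition det2 (M : 'M[C]_2) := M 0 0 * M 1 1 - M 0 1 * M 1 0.

Lemma det2E a b c d : det2 (mx2 a b c d) = a * d - b * c.
Proof. by rewrite /det2 !mxE. Qed.

Lemma det2M (A B : 'M[C]_2) : det2 (A *m B) = det2 A * det2 B.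
Proof.
rewrite (mx2E A) (mx2E B) mx2_mul !det2E; ring.
Qed.

Lemma mx2_uniq (U V A : 'M[C]_2) : U *m A = V *m A -> det2 A != 0 -> U = V.
Proof.
move=> H hd.
pose adj := mx2 (A 1 1) (- A 0 1) (- A 1 0) (A 0 0).
have K : forall W : 'M[C]_2, (W *m A) *m adj = det2 A *: W.
  move=> W; rewrite /adj (mx2E W) (mx2E A) !mx2_mul mx2_scale det2E !mxE /=.
  apply: mx2_eq; ring.
have := K U; rewrite H K => /eqP; rewrite -subr_eq0 -scalerBr scaler_eq0.
by rewrite (negbTE hd) subr_eq0 => /eqP.
Qed.

Lemma cadd (a b c d : R) : Complex a b + Complex c d = Complex (a + c) (b + d) :> C.
Proof. by []. Qed.
Lemma cmul (a b c d : R) : Complex a b * Complex c d = Complex (a * c - b * d) (a * d + b * c) :> C.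
Proof. by []. Qed.
Lemma copp (a b : R) : - Complex a b = Complex (- a) (- b) :> C.
Proof. by []. Qed.
Lemma c0 : 0 = Complex 0 0 :> C. Proof. by []. Qed.
Lemma c1 : 1 = Complex 1 0 :> C. Proof. by []. Qed.
Lemma crc (a : R) : a%:C%C = Complex a 0 :> C. Proof. by []. Qed.


Lemma co_add x y i : co (x + y) i = co x i + co y i. Proof. by rewrite /co mxE. Qed.
Lemma co_opp x i : co (- x) i = - co x i. Proof. by rewrite /co mxE. Qed.
Lemma co_sub x y i : co (x - y) i = co x i - co y i. Proof. by rewrite /co !mxE. Qed.
Lemma co_scale (k : R) x i : co (k *: x) i = k * co x i. Proof. by rewrite /co mxE. Qed.
Lemma co_mk0 (a b c : R) : co (mkvec a b c) 0 = a. Proof. by rewrite /co mxE. Qed.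
Lemma co_mk1 (a b c : R) : co (mkvec a b c) 1 = b. Proof. by rewrite /co mxE. Qed.
Lemma co_mk2 (a b c : R) : co (mkvec a b c) 2 = c. Proof. by rewrite /co mxE. Qed.

Lemma vecP x y : co x 0 = co y 0 -> co x 1 = co y 1 -> co x 2 = co y 2 -> x = y.
Proof.
move=> h0 h1 h2; apply/rowP => i.
have -> : x ord0 i = co x i by []. have -> : y ord0 i = co y i by [].
case: i => [[|[|[|//]]]] Hi.
- by have -> : Ordinal Hi = 0 by exact: val_inj.
- by have -> : Ordinal Hi = 1 by exact: val_inj.
- by have -> : Ordinal Hi = 2 by exact: val_inj.
Qed.

Definition Nm x : 'M[C]_2 :=
  mx2 (Complex 0 (co x 2)) (Complex (co x 0 + co x 1) 0)
      (Complex (co x 0 - co x 1) 0) (Complex 0 (- co x 2)).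
Definition sc (c : C) : 'M[C]_2 := mx2 c (Complex 0 0) (Complex 0 0) c.
Definition Sm x y (q : R) : 'M[C]_2 := Nm x + Nm y + sc (Complex 0 q).

Ltac cnorm := rewrite ?(cadd, cmul, copp, crc).
Ltac coexp := rewrite /Ru /Rv /rhat /khat /den /mink /=
   ?(co_add, co_sub, co_opp, co_scale, co_mk0, co_mk1, co_mk2).

Lemma RuS a b x y : den x y (a - b) != 0 ->
  Nm (Ru a b x y) *m Sm x y (a - b) = Sm x y (a - b) *m Nm x.
Proof.
move=> hD; rewrite /Sm /Nm /sc !mx2_add !mx2_mul.
move: hD; coexp => hD.
by apply: mx2_eq; cnorm; congr Complex; field.
Qed.


Lemma RvS a b x y : den x y (a - b) != 0 ->
  Nm (Rv a b x y) *m Sm x y (a - b) = Sm x y (a - b) *m Nm y.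
Proof.
move=> hD; rewrite /Sm /Nm /sc !mx2_add !mx2_mul.
move: hD; coexp => hD.
by apply: mx2_eq; cnorm; congr Complex; field.
Qed.

Lemma sumRuv a b x y : Ru a b x y + Rv a b x y = x + y.
Proof. apply: vecP; rewrite !co_add; coexp; ring. Qed.

Lemma minkRu a b x y : den x y (a - b) != 0 -> mink (Ru a b x y) (Ru a b x y) = mink x x.
Proof. move=> hD; move: hD; rewrite /mink; coexp => hD; field=> //. Qed.

Lemma minkRv a b x y : den x y (a - b) != 0 -> mink (Rv a b x y) (Rv a b x y) = mink y y.
Proof. move=> hD; move: hD; rewrite /mink; coexp => hD; field=> //. Qed.

Lemma K2 a b x y : den x y (a - b) != 0 ->
  Nm (Ru a b x y) *m (Nm (Rv a b x y) + sc (Complex 0 (a - b)))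
  = (Nm y + sc (Complex 0 (a - b))) *m Nm x.
Proof.
move=> hD; rewrite /Nm /sc !mx2_add !mx2_mul.
move: hD; coexp => hD.
by apply: mx2_eq; cnorm; congr Complex; field.
Qed.

Lemma K3 a b x y : den x y (a - b) != 0 ->
  (Nm (Rv a b x y) + sc (Complex 0 (b - a))) *m Nm (Ru a b x y)
  = Nm x *m (Nm y + sc (Complex 0 (b - a))).
Proof.
move=> hD; rewrite /Nm /sc !mx2_add !mx2_mul.
move: hD; coexp => hD.
by apply: mx2_eq; cnorm; congr Complex; field.
Qed.

End Work.


Section Work2.
Variable R : rcfType.
Local Notation C := (R[i]).
Implicit Types (x y z u v w : vec R).

Ltac cnorm := rewrite ?(cadd, cmul, copp, crc).
Ltac coexp := rewrite /Ru /Rv /rhat /khat /den /mink /=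
   ?(co_add, co_sub, co_opp, co_scale, co_mk0, co_mk1, co_mk2).

Lemma Nm_add x y : Nm (x + y) = Nm x + Nm y :> 'M[C]_2.
Proof. rewrite /Nm mx2_add !co_add; apply: mx2_eq; cnorm; congr Complex; ring. Qed.

Lemma Nm_opp x : Nm (- x) = - Nm x :> 'M[C]_2.
Proof. rewrite /Nm mx2_opp !co_opp; apply: mx2_eq; cnorm; congr Complex; ring. Qed.

Lemma Nm_sub x y : Nm (x - y) = Nm x - Nm y :> 'M[C]_2.
Proof. by rewrite Nm_add Nm_opp. Qed.

Lemma Nm_inj x y : Nm x = Nm y :> 'M[C]_2 -> x = y.
Proof.
rewrite /Nm => /mx2_inj [h00 h01 h10 _].
case: h00 => h2. case: h01 => hp. case: h10 => hm.
apply: vecP => //; lra.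
Qed.


Lemma detS x y q : det2 (Sm x y q) = Complex (- den x y q) 0.
Proof.
rewrite /Sm /Nm /sc !mx2_add det2E /den /mink !co_add; cnorm; congr Complex; ring.
Qed.

Lemma detS_neq0 x y q : den x y q != 0 -> det2 (Sm x y q) != 0.
Proof.
move=> hD; rewrite detS; apply/eqP => -[] /eqP; rewrite oppr_eq0; exact/negP.
Qed.

Lemma Nm_sq x : Nm x *m Nm x = sc (Complex (mink x x) 0).
Proof.
rewrite /Nm /sc mx2_mul /mink; apply: mx2_eq; cnorm; congr Complex; ring.
Qed.

Lemma Lax_dec x a (zeta : C) : Lax x a zeta = sc (zeta - Complex 0 a) + Nm x.
Proof.
have -> : Lax x a zeta = mx2 (zeta + Complex 0 1 * ((co x 2 - a)%:C)%C)
   ((co x 0 + co x 1)%:C)%C ((co x 0 - co x 1)%:C)%C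
   (zeta - Complex 0 1 * ((co x 2 + a)%:C)%C) by [].
case: zeta => z1 z2.
rewrite /sc /Nm mx2_add; apply: mx2_eq; cnorm; congr Complex; ring.
Qed.

Definition Pf (X Y q : R) := (X - Y - q ^+ 2) ^+ 2 + 4 * q ^+ 2 * X.

Lemma invU1 a b x y : den x y (a - b) != 0 ->
  den (Ru a b x y) (- y) (a - b) * den x y (a - b) = Pf (mink x x) (mink y y) (a - b).
Proof. move=> hD; move: hD; rewrite /Pf; coexp => hD; field => //. Qed.

Lemma invV1 a b x y : den x y (a - b) != 0 ->
  den (- x) (Rv a b x y) (a - b) * den x y (a - b) = Pf (mink y y) (mink x x) (a - b).
Proof. move=> hD; move: hD; rewrite /Pf; coexp => hD; field => //. Qed.

Lemma invU2 a b x y : den x y (a - b) != 0 ->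
  Nm x *m Sm (Ru a b x y) (- y) (a - b) = Sm (Ru a b x y) (- y) (a - b) *m Nm (Ru a b x y).
Proof.
move=> hD; rewrite /Sm /Nm /sc !mx2_add !mx2_mul.
move: hD; coexp => hD.
by apply: mx2_eq; cnorm; congr Complex; field.
Qed.

Lemma invV2 a b x y : den x y (a - b) != 0 ->
  Nm y *m Sm (- x) (Rv a b x y) (a - b) = Sm (- x) (Rv a b x y) (a - b) *m Nm (Rv a b x y).
Proof.
move=> hD; rewrite /Sm /Nm /sc !mx2_add !mx2_mul.
move: hD; coexp => hD.
by apply: mx2_eq; cnorm; congr Complex; field.
Qed.

End Work2.


Section Work3.
Variable R : rcfType.
Local Notation C := (R[i]).
Local Notation M := ('M[C]_2).
Implicit Types (x y z u v w : vec R).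

Ltac cnorm := rewrite ?(cadd, cmul, copp, crc).
Ltac mxring := rewrite /sc -?c0 ?(mx2_add, mx2_sub, mx2_opp, mx2_mul); apply: mx2_eq; ring.

Lemma lax_gen (U V X Y : M) (al be : C) :
  V = X + Y - U -> U *m (V + sc (be - al)) = (Y + sc (be - al)) *m X ->
  (sc al + U) *m (sc be + V) = (sc be + Y) *m (sc al + X).
Proof.
move=> hV H; apply/eqP; rewrite -subr_eq0.
have -> : (sc al + U) *m (sc be + V) - (sc be + Y) *m (sc al + X)
   = U *m (V + sc (be - al)) - (Y + sc (be - al)) *m X.
  rewrite hV (mx2E U) (mx2E X) (mx2E Y); mxring.
by rewrite H subrr.
Qed.

Lemma GC1 (X Y Z X1 X1' Y1' : M) (sab sac : C) :
  let Z1' := Y + Z - Y1' in let sbc := sac - sab in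
  let T2 := X + Z1' + sc sac in let S1 := X + Y + sc sab in
  (X1' + Y1' + sc sab) *m T2 - (X1 + Z + sc sac) *m S1 =
  (X1' *m T2 - T2 *m X) - (X1 *m S1 - S1 *m X) +
  (Y1' *m (Z1' + sc sbc) - (Z + sc sbc) *m Y).
Proof.
rewrite /= (mx2E X) (mx2E Y) (mx2E Z) (mx2E X1) (mx2E X1') (mx2E Y1'); mxring.
Qed.

Lemma GC2 (X Y Z X1 Z1 Z1' : M) (sab sac : C) :
  let Y1 := X + Y - X1 in let sbc := sac - sab in
  let S2 := X1 + Z + sc sac in let T1 := Y + Z + sc sbc in
  (Y1 + Z1 + sc sbc) *m S2 - (X + Z1' + sc sac) *m T1 =
  (Z1 *m S2 - S2 *m Z) - (Z1' *m T1 - T1 *m Z) +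
  ((Y1 + sc (- sab)) *m X1 - X *m (Y + sc (- sab))).
Proof.
rewrite /= (mx2E X) (mx2E Y) (mx2E Z) (mx2E X1) (mx2E Z1) (mx2E Z1'); mxring.
Qed.


Lemma Rv_sub a b x y : Rv a b x y = x + y - Ru a b x y.
Proof. by rewrite -(sumRuv a b x y) [Ru a b x y + _]addrC addrK. Qed.

Lemma part3 a b x y : den x y (a - b) != 0 ->
  let u := Ru a b x y in let v := Rv a b x y in
  [/\ u + v = x + y, mink u u = mink x x, mink v v = mink y y &
      forall zeta : C, Lax u a zeta *m Lax v b zeta = Lax y b zeta *m Lax x a zeta].
Proof.
move=> hD /=; split.
- exact: sumRuv.
- exact: minkRu.
- exact: minkRv.
move=> zeta; rewrite !Lax_dec; apply: lax_gen.
  by rewrite Rv_sub Nm_sub Nm_add.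
have -> : (zeta - Complex 0 b) - (zeta - Complex 0 a) = Complex 0 (a - b).
  by case: zeta => z1 z2; cnorm; congr Complex; ring.
exact: K2.
Qed.


Lemma sc_sub (p r : R) : Complex 0 p - Complex 0 r = Complex 0 (p - r) :> C.
Proof. by cnorm; congr Complex; ring. Qed.

Lemma YB : YB_where_defined R.
Proof.
move=> a b c x y z; rewrite /Rhat /Rdef /=.
set x1 := Ru a b x y; set y1 := Rv a b x y.
set x2 := Ru a c x1 z; set z1 := Rv a c x1 z.
set y2 := Ru b c y1 z1; set z2 := Rv b c y1 z1.
set y1' := Ru b c y z; set z1' := Rv b c y z.
set x1' := Ru a c x z1'; set z2' := Rv a c x z1'.
set x2' := Ru a b x1' y1'; set y2' := Rv a b x1' y1'.
move=> d1 d2 d3 d4 d5 d6.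
set sab := Complex 0 (a - b) : C. set sac := Complex 0 (a - c) : C.
set sbc := Complex 0 (b - c) : C.
have ebc : sbc = sac - sab by rewrite /sbc /sac /sab sc_sub; congr Complex; ring.
have eba : Complex 0 (b - a) = - sab :> C by rewrite /sab; cnorm; congr Complex; ring.
set S1 := Nm x + Nm y + sc sab. set S2 := Nm x1 + Nm z + sc sac.
set S3 := Nm y1 + Nm z1 + sc sbc.
set T1 := Nm y + Nm z + sc sbc. set T2 := Nm x + Nm z1' + sc sac.
set T3 := Nm x1' + Nm y1' + sc sab.
have h1 : Nm x1 *m S1 = S1 *m Nm x := RuS d1.
have h2 : Nm x1' *m T2 = T2 *m Nm x := RuS d5.
have h3 : Nm y1' *m (Nm z1' + sc sbc) = (Nm z + sc sbc) *m Nm y := K2 d4.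
have h5 : Nm z1 *m S2 = S2 *m Nm z := RvS d2.
have h6 : Nm z1' *m T1 = T1 *m Nm z := RvS d4.
have h7 : (Nm y1 + sc (- sab)) *m Nm x1 = Nm x *m (Nm y + sc (- sab)).
  by rewrite -eba; exact: K3 d1.
have g1 : Nm x2 *m S2 = S2 *m Nm x1 := RuS d2.
have g2 : Nm x2' *m T3 = T3 *m Nm x1' := RuS d6.
have g3 : Nm z2 *m S3 = S3 *m Nm z1 := RvS d3.
have g4 : Nm z2' *m T2 = T2 *m Nm z1' := RvS d5.
have dS1 : det2 S1 != 0 := detS_neq0 d1.
have dS2 : det2 S2 != 0 := detS_neq0 d2.
have dS3 : det2 S3 != 0 := detS_neq0 d3.
have e1 : x1 + y1 = x + y := sumRuv a b x y.
have e2 : x2 + z1 = x1 + z := sumRuv a c x1 z.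
have e3 : y2 + z2 = y1 + z1 := sumRuv b c y1 z1.
have e4 : y1' + z1' = y + z := sumRuv b c y z.
have e5 : x1' + z2' = x + z1' := sumRuv a c x z1'.
have e6 : x2' + y2' = x1' + y1' := sumRuv a b x1' y1'.
clearbody x1 y1 x2 z1 y2 z2 y1' z1' x1' z2' x2' y2'.
have ez1' : Nm z1' = Nm y + Nm z - Nm y1'.
  by rewrite -Nm_add -Nm_sub -e4 [y1' + z1']addrC addrK.
have ey1 : Nm y1 = Nm x + Nm y - Nm x1.
  by rewrite -Nm_add -Nm_sub -e1 [x1 + y1]addrC addrK.
have eS1 : S1 = Nm x + Nm y + sc sab by [].
have eS2 : S2 = Nm x1 + Nm z + sc sac by [].
have eS3 : S3 = Nm y1 + Nm z1 + sc sbc by [].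
have eT1 : T1 = Nm y + Nm z + sc sbc by [].
have eT2 : T2 = Nm x + Nm z1' + sc sac by [].
have eT3 : T3 = Nm x1' + Nm y1' + sc sab by [].
clearbody S1 S2 S3 T1 T2 T3 sab sac sbc.
have C1 : S2 *m S1 = T3 *m T2.
  have G := GC1 (Nm x) (Nm y) (Nm z) (Nm x1) (Nm x1') (Nm y1') sab sac.
  cbv zeta in G.
  rewrite -ez1' -ebc -eT3 -eT2 -eS2 -eS1 h1 h2 h3 !subrr addr0 in G.
  by apply/eqP; rewrite eq_sym -subr_eq0 G.
have C2 : S3 *m S2 = T2 *m T1.
  have G := GC2 (Nm x) (Nm y) (Nm z) (Nm x1) (Nm z1) (Nm z1') sab sac.
  cbv zeta in G.
  rewrite -ey1 -ebc -eT2 -eT1 -eS2 -eS3 h5 h6 h7 !subrr addr0 in G.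
  by apply/eqP; rewrite -subr_eq0 G.
have ex2 : x2 = x2'.
  apply: Nm_inj; apply: (@mx2_uniq _ _ _ (S2 *m S1)); last first.
    by rewrite det2M mulf_neq0.
  rewrite mulmxA g1 -mulmxA h1 mulmxA C1 -mulmxA -h2 mulmxA -g2 -mulmxA.
  by [].
have ez2 : z2 = z2'.
  apply: Nm_inj; apply: (@mx2_uniq _ _ _ (S3 *m S2)); last first.
    by rewrite det2M mulf_neq0.
  rewrite mulmxA g3 -mulmxA h5 mulmxA C2 -mulmxA -h6 mulmxA -g4 -mulmxA.
  by [].
have ey2 : y2 = y2'.
  have s1 : x2 + y2 + z2 = x + y + z.
    by rewrite -addrA e3 addrCA e2 addrA [y1 + x1]addrC e1.
  have s2 : x2' + y2' + z2' = x + y + z.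
    by rewrite e6 -addrA addrCA e5 addrCA e4 addrA.
  by move: s1; rewrite -s2 ex2 ez2 => /addIr /addrI.
by rewrite ex2 ey2 ez2.
Qed.

End Work3.


Section Gen.
Variable T : comPzRingType.
Definition mT (a0 a1 a2 b0 b1 b2 : T) := a0 * b0 - a1 * b1 - a2 * b2.
Definition DT (x0 x1 x2 y0 y1 y2 q : T) :=
  mT (x0 + y0) (x1 + y1) (x2 + y2) (x0 + y0) (x1 + y1) (x2 + y2) + q ^+ 2.
Definition sel3 (i : 'I_3) (a b c : T) :=
  if i == 0 :> nat then a else if i == 1 :> nat then b else c.
Definition nUT (x0 x1 x2 y0 y1 y2 q : T) (i : 'I_3) :=
  (mT x0 x1 x2 x0 x1 x2 - mT y0 y1 y2 y0 y1 y2 + q ^+ 2) * sel3 i x0 x1 x2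
  + (DT x0 x1 x2 y0 y1 y2 q - mT y0 y1 y2 y0 y1 y2 + mT x0 x1 x2 x0 x1 x2 - q ^+ 2)
      * sel3 i y0 y1 y2
  + 2 * q * sel3 i (x1 * y2 - x2 * y1) (x0 * y2 - x2 * y0) (x1 * y0 - x0 * y1).
Definition nVT (x0 x1 x2 y0 y1 y2 q : T) (i : 'I_3) :=
  (DT x0 x1 x2 y0 y1 y2 q - mT x0 x1 x2 x0 x1 x2 + mT y0 y1 y2 y0 y1 y2 - q ^+ 2)
      * sel3 i x0 x1 x2
  + (mT y0 y1 y2 y0 y1 y2 - mT x0 x1 x2 x0 x1 x2 + q ^+ 2) * sel3 i y0 y1 y2
  - 2 * q * sel3 i (x1 * y2 - x2 * y1) (x0 * y2 - x2 * y0) (x1 * y0 - x0 * y1).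
Definition PT (x0 x1 x2 y0 y1 y2 q : T) :=
  (mT x0 x1 x2 x0 x1 x2 - mT y0 y1 y2 y0 y1 y2 - q ^+ 2) ^+ 2
  + 4 * q ^+ 2 * mT x0 x1 x2 x0 x1 x2.
End Gen.

Section Work4.
Variable R : rcfType.
Implicit Types (x y z u v w : vec R).
Local Notation P := ({mpoly R[3]}).

Ltac coexp := rewrite /Ru /Rv /rhat /khat /den /mink /=
   ?(co_add, co_sub, co_opp, co_scale, co_mk0, co_mk1, co_mk2).
Lemma ev_sel3 (v : 'I_3 -> R) i (a b c : P) :
  (sel3 i a b c).@[v] = sel3 i a.@[v] b.@[v] c.@[v].
Proof. by rewrite /sel3; case: ifP => _ //; case: ifP. Qed.

Ltac mev := rewrite ?(mevalD, mevalB, mevalM, mevalN, mevalXU, mevalC, ev_sel3);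
   rewrite ?(rmorphXn, rmorph_nat).

Lemma ev_mT (v : 'I_3 -> R) (a0 a1 a2 b0 b1 b2 : P) :
  (mT a0 a1 a2 b0 b1 b2).@[v] = mT a0.@[v] a1.@[v] a2.@[v] b0.@[v] b1.@[v] b2.@[v].
Proof. by rewrite /mT; mev. Qed.

Lemma ev_DT (v : 'I_3 -> R) (a0 a1 a2 b0 b1 b2 q : P) :
  (DT a0 a1 a2 b0 b1 b2 q).@[v] = DT a0.@[v] a1.@[v] a2.@[v] b0.@[v] b1.@[v] b2.@[v] q.@[v].
Proof. by rewrite /DT /mT; mev. Qed.


Lemma ev_nUT (v : 'I_3 -> R) (a0 a1 a2 b0 b1 b2 q : P) i :
  (nUT a0 a1 a2 b0 b1 b2 q i).@[v] =
  nUT a0.@[v] a1.@[v] a2.@[v] b0.@[v] b1.@[v] b2.@[v] q.@[v] i.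
Proof. by rewrite /nUT /DT /mT; mev. Qed.

Lemma ev_nVT (v : 'I_3 -> R) (a0 a1 a2 b0 b1 b2 q : P) i :
  (nVT a0 a1 a2 b0 b1 b2 q i).@[v] =
  nVT a0.@[v] a1.@[v] a2.@[v] b0.@[v] b1.@[v] b2.@[v] q.@[v] i.
Proof. by rewrite /nVT /DT /mT; mev. Qed.

Lemma ev_PT (v : 'I_3 -> R) (a0 a1 a2 b0 b1 b2 q : P) :
  (PT a0 a1 a2 b0 b1 b2 q).@[v] = PT a0.@[v] a1.@[v] a2.@[v] b0.@[v] b1.@[v] b2.@[v] q.@[v].
Proof. by rewrite /PT /mT; mev. Qed.


Lemma sel3_0 (a b c : R) : sel3 0 a b c = a. Proof. by []. Qed.
Lemma sel3_1 (a b c : R) : sel3 1 a b c = b. Proof. by []. Qed.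
Lemma sel3_2 (a b c : R) : sel3 2 a b c = c. Proof. by []. Qed.

Lemma ord3_cases (k : 'I_3) : k = 0 \/ k = 1 \/ k = 2.
Proof.
case: k => [[|[|[|//]]]] Hk; [left|right;left|right;right]; exact: val_inj.
Qed.

Lemma DT_den x y q :
  DT (co x 0) (co x 1) (co x 2) (co y 0) (co y 1) (co y 2) q = den x y q.
Proof. by rewrite /DT /mT /den /mink !co_add. Qed.

Lemma PT_Pf x y q :
  PT (co x 0) (co x 1) (co x 2) (co y 0) (co y 1) (co y 2) q = Pf (mink x x) (mink y y) q.
Proof. by rewrite /PT /Pf /mT /mink. Qed.

Lemma Ru_nUT a b x y k : den x y (a - b) != 0 ->
  co (Ru a b x y) k = nUT (co x 0) (co x 1) (co x 2) (co y 0) (co y 1) (co y 2) (a - b) k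
                      / den x y (a - b).
Proof.
move=> hD; move: hD; rewrite -DT_den => hD.
have [->|[->|->]] := ord3_cases k; rewrite /nUT ?(sel3_0, sel3_1, sel3_2);
  move: hD; rewrite /DT /mT; coexp => hD; field => //.
Qed.

Lemma Rv_nVT a b x y k : den x y (a - b) != 0 ->
  co (Rv a b x y) k = nVT (co x 0) (co x 1) (co x 2) (co y 0) (co y 1) (co y 2) (a - b) k
                      / den x y (a - b).
Proof.
move=> hD; move: hD; rewrite -DT_den => hD.
have [->|[->|->]] := ord3_cases k; rewrite /nVT ?(sel3_0, sel3_1, sel3_2);
  move: hD; rewrite /DT /mT; coexp => hD; field => //.
Qed.


Lemma invU a b x y : den x y (a - b) != 0 -> Pf (mink x x) (mink y y) (a - b) != 0 ->
  den (Ru a b x y) (- y) (a - b) != 0 /\ Ru a b (Ru a b x y) (- y) = x.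
Proof.
move=> hD hP.
have hD' : den (Ru a b x y) (- y) (a - b) != 0.
  by move: hP; rewrite -(invU1 hD) mulf_eq0 negb_or => /andP [].
split => //; apply: Nm_inj.
apply: (@mx2_uniq _ _ _ (Sm (Ru a b x y) (- y) (a - b))); last exact: detS_neq0.
by rewrite (RuS hD') (invU2 hD).
Qed.

Lemma invV a b x y : den x y (a - b) != 0 -> Pf (mink y y) (mink x x) (a - b) != 0 ->
  den (- x) (Rv a b x y) (a - b) != 0 /\ Rv a b (- x) (Rv a b x y) = y.
Proof.
move=> hD hP.
have hD' : den (- x) (Rv a b x y) (a - b) != 0.
  by move: hP; rewrite -(invV1 hD) mulf_eq0 negb_or => /andP [].
split => //; apply: Nm_inj.
apply: (@mx2_uniq _ _ _ (Sm (- x) (Rv a b x y) (a - b))); last exact: detS_neq0.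
by rewrite (RvS hD') (invV2 hD).
Qed.

Definition XP (k : 'I_3) : P := 'X_k.

Definition FU a b y : ratmap R :=
  RatMap (fun i => nUT (XP 0) (XP 1) (XP 2) (co y 0)%:MP (co y 1)%:MP (co y 2)%:MP (a - b)%:MP i)
         (fun _ => DT (XP 0) (XP 1) (XP 2) (co y 0)%:MP (co y 1)%:MP (co y 2)%:MP (a - b)%:MP).
Definition hU a b y : P :=
  DT (XP 0) (XP 1) (XP 2) (co y 0)%:MP (co y 1)%:MP (co y 2)%:MP (a - b)%:MP *
  PT (XP 0) (XP 1) (XP 2) (co y 0)%:MP (co y 1)%:MP (co y 2)%:MP (a - b)%:MP.
Definition FV a b x : ratmap R :=
  RatMap (fun i => nVT (co x 0)%:MP (co x 1)%:MP (co x 2)%:MP (XP 0) (XP 1) (XP 2) (a - b)%:MP i)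
         (fun _ => DT (co x 0)%:MP (co x 1)%:MP (co x 2)%:MP (XP 0) (XP 1) (XP 2) (a - b)%:MP).
Definition hV a b x : P :=
  DT (co x 0)%:MP (co x 1)%:MP (co x 2)%:MP (XP 0) (XP 1) (XP 2) (a - b)%:MP *
  PT (XP 0) (XP 1) (XP 2) (co x 0)%:MP (co x 1)%:MP (co x 2)%:MP (a - b)%:MP.

Lemma evXP x k : (XP k).@[ptv x] = co x k. Proof. by rewrite /XP mevalXU. Qed.

Lemma co_rateval F x k : co (rateval F x) k = (rnum F k).@[ptv x] / (rden F k).@[ptv x].
Proof. by rewrite /co /rateval mxE. Qed.

Lemma FU_ok a b y x : den x y (a - b) != 0 ->
  ratdef (FU a b y) x /\ rateval (FU a b y) x = Ru a b x y.
Proof.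
move=> hD.
have eD : (DT (XP 0) (XP 1) (XP 2) (co y 0)%:MP (co y 1)%:MP (co y 2)%:MP (a - b)%:MP).@[ptv x]
   = den x y (a - b) by rewrite ev_DT !evXP !mevalC DT_den.
split; first by move=> i /=; rewrite eD.
have H : forall k, co (rateval (FU a b y) x) k = co (Ru a b x y) k.
  by move=> k; rewrite co_rateval /= eD ev_nUT !evXP !mevalC (Ru_nUT _ hD).
by apply: vecP; apply: H.
Qed.

Lemma FV_ok a b x y : den x y (a - b) != 0 ->
  ratdef (FV a b x) y /\ rateval (FV a b x) y = Rv a b x y.
Proof.
move=> hD.
have eD : (DT (co x 0)%:MP (co x 1)%:MP (co x 2)%:MP (XP 0) (XP 1) (XP 2) (a - b)%:MP).@[ptv y]
   = den x y (a - b) by rewrite ev_DT !evXP !mevalC DT_den.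
split; first by move=> i /=; rewrite eD.
have H : forall k, co (rateval (FV a b x) y) k = co (Rv a b x y) k.
  by move=> k; rewrite co_rateval /= eD ev_nVT !evXP !mevalC (Rv_nVT _ hD).
by apply: vecP; apply: H.
Qed.

Lemma hU_ev a b y x :
  (hU a b y).@[ptv x] = den x y (a - b) * Pf (mink x x) (mink y y) (a - b).
Proof. by rewrite /hU mevalM ev_DT ev_PT !evXP !mevalC DT_den PT_Pf. Qed.

Lemma hV_ev a b x y :
  (hV a b x).@[ptv y] = den x y (a - b) * Pf (mink y y) (mink x x) (a - b).
Proof. by rewrite /hV mevalM ev_DT ev_PT !evXP !mevalC DT_den PT_Pf. Qed.


Lemma mpoly_neq0 (p : P) x : p.@[ptv x] != 0 -> p != 0.
Proof. by apply: contraNneq => ->; rewrite meval0. Qed.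

Lemma sq1_neq0 (q : R) : 1 + q ^+ 2 != 0.
Proof. apply: lt0r_neq0; nra. Qed.

Lemma wit_Pf (Y q : R) : exists t : R, Pf (mink (mkvec t 0 0) (mkvec t 0 0)) Y q != 0.
Proof.
have [hK|hK] := eqVneq (Y + q ^+ 2) 0.
  exists 1; rewrite /mink !co_mk0 !co_mk1 !co_mk2 /Pf.
  have -> : 1 * 1 - 0 * 0 - 0 * 0 - Y - q ^+ 2 = 1 - (Y + q ^+ 2) by ring.
  rewrite hK subr0; apply: lt0r_neq0; nra.
exists 0; rewrite /mink !co_mk0 !co_mk1 !co_mk2 /Pf.
have -> : (0 * 0 - 0 * 0 - 0 * 0 - Y - q ^+ 2) ^+ 2 + 4 * q ^+ 2 * (0 * 0 - 0 * 0 - 0 * 0)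
   = (Y + q ^+ 2) ^+ 2 by ring.
by rewrite expf_neq0.
Qed.

Lemma hU_neq0 a b y : hU a b y != 0.
Proof.
rewrite /hU mulf_neq0 //.
  apply: (@mpoly_neq0 _ (mkvec (1 - co y 0) (- co y 1) (- co y 2))).
  rewrite ev_DT !evXP !mevalC DT_den /den /mink !co_add !co_mk0 !co_mk1 !co_mk2.
  have -> : (1 - co y 0 + co y 0) * (1 - co y 0 + co y 0) - (- co y 1 + co y 1) * (- co y 1 + co y 1)
     - (- co y 2 + co y 2) * (- co y 2 + co y 2) + (a - b) ^+ 2 = 1 + (a - b) ^+ 2 by ring.
  exact: sq1_neq0.
have [t ht] := wit_Pf (mink y y) (a - b).
apply: (@mpoly_neq0 _ (mkvec t 0 0)).
by rewrite ev_PT !evXP !mevalC PT_Pf.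
Qed.

Lemma hV_neq0 a b x : hV a b x != 0.
Proof.
rewrite /hV mulf_neq0 //.
  apply: (@mpoly_neq0 _ (mkvec (1 - co x 0) (- co x 1) (- co x 2))).
  rewrite ev_DT !evXP !mevalC DT_den /den /mink !co_add !co_mk0 !co_mk1 !co_mk2.
  have -> : (co x 0 + (1 - co x 0)) * (co x 0 + (1 - co x 0)) - (co x 1 - co x 1) * (co x 1 - co x 1)
     - (co x 2 - co x 2) * (co x 2 - co x 2) + (a - b) ^+ 2 = 1 + (a - b) ^+ 2 by ring.
  exact: sq1_neq0.
have [t ht] := wit_Pf (mink x x) (a - b).
apply: (@mpoly_neq0 _ (mkvec t 0 0)).
by rewrite ev_PT !evXP !mevalC PT_Pf.
Qed.

Lemma biratU a b y : birational (fun x => Ru a b x y).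
Proof.
exists (FU a b y), (FU a b (- y)), (hU a b y), (hU a b (- y)).
split; first exact: hU_neq0. split; first exact: hU_neq0. split.
- move=> x; rewrite hU_ev mulf_eq0 negb_or => /andP [hD hP].
  have [hd1 he1] := FU_ok hD.
  have [hD' hinv] := invU hD hP.
  have [hd2 he2] := FU_ok hD'.
  by split => //; rewrite he2 hinv.
- move=> w; rewrite hU_ev mulf_eq0 negb_or => /andP [hD hP].
  have [hd1 he1] := FU_ok hD.
  have [hD' hinv] := invU hD hP; rewrite opprK in hD' hinv.
  have [hd2 he2] := FU_ok hD'.
  by split => //; rewrite he1 // he2 hinv.
Qed.

Lemma biratV a b x : birational (fun y => Rv a b x y).
Proof.
exists (FV a b x), (FV a b (- x)), (hV a b x), (hV a b (- x)).
split; first exact: hV_neq0. split; first exact: hV_neq0. split.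
- move=> y; rewrite hV_ev mulf_eq0 negb_or => /andP [hD hP].
  have [hd1 he1] := FV_ok hD.
  have [hD' hinv] := invV hD hP.
  have [hd2 he2] := FV_ok hD'.
  by split => //; rewrite he2 hinv.
- move=> w; rewrite hV_ev mulf_eq0 negb_or => /andP [hD hP].
  have [hd1 he1] := FV_ok hD.
  have [hD' hinv] := invV hD hP; rewrite opprK in hD' hinv.
  have [hd2 he2] := FV_ok hD'.
  by split => //; rewrite he1 // he2 hinv.
Qed.

Theorem theorem4p1_sec :
  YB_where_defined R /\ quadrirational R /\
  (forall (a b : R) (x y : vec R), den x y (a - b) != 0 ->
     let u := Ru a b x y in
     let v := Rv a b x y in
     [/\ u + v = x + y, mink u u = mink x x, mink v v = mink y y &
         forall zeta : R[i],
           Lax u a zeta *m Lax v b zeta = Lax y b zeta *m Lax x a zeta]).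
Proof.
split; first exact: YB.
split; first by move=> a b; split => [y|x]; [exact: biratU | exact: biratV].
exact: part3.
Qed.

End Work4.

Theorem theorem4p1 (R : rcfType) :
  YB_where_defined R /\ quadrirational R /\
  (forall (a b : R) (x y : vec R), den x y (a - b) != 0 ->
     let u := Ru a b x y in
     let v := Rv a b x y in
     [/\ u + v = x + y, mink u u = mink x x, mink v v = mink y y &
         forall zeta : R[i],
           Lax u a zeta *m Lax v b zeta = Lax y b zeta *m Lax x a zeta]).
Proof. exact: (@theorem4p1_sec R). Qed.
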